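(* Let $A=(i_1,\dots,i_a)$ be an ordered tuple of distinct elements of $I_d$, $\alpha\in\mathbb{Z}_2^{a,\mathrm{ev}}$, and $r\ge0$. Then the X-cycle $A^{(r,\alpha)}$ commutes with every $x_j$, $j\in I_d$; i.e. it lies in the centralizer $\mathcal{C}_X$ of the polynomial subalgebra of $\mathcal{G}$.
   Context: Fix a commutative ring $R$ and integers $l,d\ge1$; $I_a=\{1,\dots,a\}$. Let $\mathcal{G}$ be the $R$-superalgebra that is free as an $R$-module with basis $\{x_1^{m_1}\cdots x_d^{m_d}\,w\,c_1^{e_1}\cdots c_d^{e_d}: 0\le m_i\le l-1,\ w\in\Sigma_d,\ e_i\in\{0,1\}\}$, with multiplication determined by: the $x_i$ commute and $x_i^l=0$; $w\in\Sigma_d$ multiply as in the symmetric group (composition right to left); $c_i^2=1$, $c_ic_j=-c_jc_i$ for $i\ne j$; $wx_i=x_{w(i)}w$, $wc_i=c_{w(i)}w$; $x_ic_i=-c_ix_i$, $x_ic_j=c_jx_i$ for $i\ne j$. For an ordered tuple $A=(i_1,\dots,i_a)$ of distinct elements of $I_d$, $\sigma_A$ is the cycle $i_1\mapsto i_2\mapsto\dots\mapsto i_a\mapsto i_1$. For $\alpha\in\mathbb{Z}_2^a$: $|\alpha|=\sum_j\alpha_j$; $\mathbb{Z}_2^{a,\mathrm{ev}}$ is the set of $\alpha$ with $|\alpha|$ even; $c_\alpha(A)=c_{i_1}^{\alpha_1}\cdots c_{i_a}^{\alpha_a}$; $\epsilon^\alpha_j=\prod_{k<j}(-1)^{\alpha_k}$.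 For $r\ge0$, $\alpha\in\mathbb{Z}_2^{a,\mathrm{ev}}$: $h^\alpha_r(A)=\sum_{r_1+\dots+r_a=(a-1)(l-1)+r,\ r_j\ge0}\prod_j(\epsilon^\alpha_jx_{i_j})^{r_j}$ and $A^{(r,\alpha)}=h^\alpha_r(A)\sigma_Ac_\alpha(A)$. *)

(* Defs.v *)
From HB Require Import structures.
From mathcomp Require Import all_boot all_order all_algebra all_fingroup.
Set Implicit Arguments. Unset Strict Implicit. Unset Printing Implicit Defensive.
Import GRing.Theory.
Local Open Scope ring_scope.

(* The superalgebra G of the paper, over a commutative ring R, with index set
   I_d = {1..d} represented by 'I_d (shifted by one).  A basis element
   x^m w c^e is indexed by (m, w, e) with m : I_d -> {0..l-1},
   w a permutation of I_d, e : I_d -> {0,1}. *)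
Definition Bidx (d l : nat) : finType :=
  ({ffun 'I_d -> 'I_l} * {perm 'I_d} * {ffun 'I_d -> bool})%type.

Notation G R d l := {ffun Bidx d l -> R^o}.

Section Alg.
Variables (R : comPzRingType) (d l : nat).
Local Notation GG := (G R d l).
Local Notation B := (Bidx d l).

Definition Gbasis (b : B) : GG := [ffun b' => (b' == b)%:R].

Definition mkexp (m : 'I_d -> nat) : option {ffun 'I_d -> 'I_l} :=
  [pick mm : {ffun 'I_d -> 'I_l} | [forall k, val (mm k) == m k]].

(* Product of basis elements (x^m w c^e)(x^m' w' c^e') computed from the
   defining relations:
     c^e x^m' = (-1)^(sum_i e_i m'_i) x^m' c^e          (x_i c_i = -c_i x_i)
     w x^m'   = x^(m' o w^-1) w                          (w x_i = x_{w(i)} w)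
     c^e w'   = w' (w'^-1 c^e w'),  w'^-1 c^e w' = (+-) c^(e o w'),
                 the sign counting inversions of w'^-1 on the support of e
     c^f c^e' = (-1)^#{(i,j) | i > j, f_i, e'_j} c^(f xor e')
     x^m x^m'' = 0 as soon as some exponent reaches l.
   The product w w' of the paper (composition right to left) is
   (w' * w)%g in mathcomp (where (s * t) x = t (s x)). *)
Definition bprod (b b' : B) : GG :=
  let: (m, w, e) := b in
  let: (m', w', e') := b' in
  let m2 := fun k : 'I_d => (m k + m' ((w^-1)%g k))%N in
  let s1 := (\sum_(i : 'I_d) e i * m' i)%N in
  let s2 := #|[set ij : 'I_d * 'I_d | [&& (ij.1 < ij.2)%N, e ij.1, e ij.2 &
                 ((w'^-1)%g ij.2 < (w'^-1)%g ij.1)%N]]| in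
  let f := fun k : 'I_d => e (w' k) in
  let s3 := #|[set ij : 'I_d * 'I_d | [&& (ij.2 < ij.1)%N, f ij.1 & e' ij.2]]| in
  let e2 := [ffun k => f k (+) e' k] in
  match mkexp m2 with
  | Some mm => ((-1) ^+ (s1 + s2 + s3)) *: Gbasis (mm, (w' * w)%g, e2)
  | None => 0
  end.

Definition Gmul (u v : GG) : GG :=
  \sum_(b : B) \sum_(b' : B) (u b * v b') *: bprod b b'.

Definition Gone : GG :=
  if mkexp (fun _ => 0%N) is Some m0 then Gbasis (m0, 1%g, [ffun _ => false]) else 0.

(* x_j (zero when l = 1, since then x_j = x_j^l = 0) *)
Definition Gx (j : 'I_d) : GG :=
  if mkexp (fun k => (k == j) : nat) is Some m then Gbasis (m, 1%g, [ffun _ => false])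
  else 0.

Definition Gc (j : 'I_d) : GG :=
  if mkexp (fun _ => 0%N) is Some m0 then Gbasis (m0, 1%g, [ffun k => k == j]) else 0.

Definition Gperm (w : {perm 'I_d}) : GG :=
  if mkexp (fun _ => 0%N) is Some m0 then Gbasis (m0, w, [ffun _ => false]) else 0.

Definition Gpow (u : GG) (n : nat) : GG := iter n (Gmul u) Gone.

Definition Gprod (a : nat) (F : 'I_a -> GG) : GG :=
  foldr (fun j acc => Gmul (F j) acc) Gone (enum 'I_a).

Definition cycf (a : nat) (A : 'I_a -> 'I_d) (k : 'I_d) : 'I_d :=
  if [pick j | A j == k] is Some j then A (ordS j) else k.

(* (cycf A is injective whenever A is; the fallback 1 is never used then) *)
Definition sigmaA (a : nat) (A : 'I_a -> 'I_d) : {perm 'I_d} :=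
  match boolP (injectiveb (cycf A)) with
  | AltTrue h => perm (elimT (injectiveP _) h)
  | AltFalse _ => 1%g
  end.

Definition epsA (a : nat) (alpha : 'I_a -> bool) (j : 'I_a) : R :=
  (-1) ^+ (\sum_(k < a | (k < j)%N) alpha k)%N.

Definition hA (a : nat) (A : 'I_a -> 'I_d) (alpha : 'I_a -> bool) (r : nat) : GG :=
  let N := ((a - 1) * (l - 1) + r)%N in
  \sum_(rr : {ffun 'I_a -> 'I_N.+1} | (\sum_(j < a) (rr j : nat))%N == N)
     Gprod (fun j => Gpow (epsA alpha j *: Gx (A j)) (rr j)).

Definition calpha (a : nat) (A : 'I_a -> 'I_d) (alpha : 'I_a -> bool) : GG :=
  Gprod (fun j => if alpha j then Gc (A j) else Gone).

Definition Xcycle (a : nat) (A : 'I_a -> 'I_d) (r : nat) (alpha : 'I_a -> bool) : GG :=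
  Gmul (Gmul (hA A alpha r) (Gperm (sigmaA A))) (calpha A alpha).

End Alg.

(* Main.v *)
Require Import Defs.
From mathcomp Require Import all_boot all_order all_algebra all_fingroup.
From mathcomp Require Import zify.
Set Implicit Arguments. Unset Strict Implicit. Unset Printing Implicit Defensive.
Import GRing.Theory.
Local Open Scope ring_scope.

Section Work.
Variables (R : comPzRingType) (d l : nat).
Local Notation GG := (G R d l).
Local Notation B := (Bidx d l).

Definition mono (m : 'I_d -> nat) (w : {perm 'I_d}) (e : {ffun 'I_d -> bool}) : GG :=
  if mkexp (d:=d) l m is Some mm then Gbasis R (mm, w, e) else 0.

Lemma mkexpP m : match mkexp (d:=d) l m with
  | Some mm => forall t, (mm t : nat) = m t
  | None => exists t, (l <= m t)%N end.
Proof.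
rewrite /mkexp; case: pickP => [mm H t | H]. move: H => /forallP H. by apply/eqP; rewrite H. 
case: (boolP [exists t, l <= m t]%N) => [/existsP[t Ht]|]; first by exists t.
rewrite negb_exists => /forallP Hall.
have Hlt t : (m t < l)%N by rewrite ltnNge Hall.
have := H [ffun t => Ordinal (Hlt t)].
rewrite (_ : [forall k, _] = true) //; apply/forallP => k; by rewrite ffunE.
Qed.

Lemma mkexp_ext m m' : (forall t, m t = m' t) -> mkexp (d:=d) l m = mkexp (d:=d) l m'.
Proof. by move=> H; rewrite /mkexp; apply: eq_pick => mm; apply: eq_forallb => k; rewrite H. Qed.

Lemma mono_ext m m' w e : (forall t, m t = m' t) -> mono m w e = mono m' w e.
Proof. by move=> H; rewrite /mono (mkexp_ext H). Qed.

Lemma mono0 m w e : (exists t, l <= m t)%N -> mono m w e = 0.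
Proof.
move=> [t Ht]; have := mkexpP m; rewrite /mono; case: (mkexp (d:=d) l m) => // mm Hmm.
by move: (ltn_ord (mm t)); rewrite Hmm ltnNge Ht.
Qed.

Lemma monoE m w e mm0 w0 e0 :
  mono m w e (mm0, w0, e0) = ([forall t, (mm0 t : nat) == m t] && (w0 == w) && (e0 == e))%:R.
Proof.
have := mkexpP m; rewrite /mono; case: (mkexp (d:=d) l m) => [mm Hmm|[t Ht]].
  rewrite /Gbasis ffunE !xpair_eqE; congr (_ && _ && _)%:R.
  apply/eqP/forallP => [-> k| Hk]; first by rewrite Hmm.
  by apply/ffunP => k; apply/val_inj; rewrite /= Hmm; apply/eqP/Hk.
rewrite ffunE; case: (boolP [forall t, _]) => // /forallP/(_ t)/eqP Hm.
by move: (ltn_ord (mm0 t)); rewrite Hm ltnNge Ht.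
Qed.

Lemma Gmul_basis b b' : Gmul (Gbasis R b) (Gbasis R b' : GG) = bprod R b b'.
Proof.
rewrite /Gmul (bigD1 b) //= (bigD1 b') //= !ffunE !eqxx mulr1 scale1r.
rewrite big1 ?addr0 => [|b2 nb]; last by rewrite ffunE (negbTE nb) mulr0 scale0r.
rewrite big1 ?addr0 // => b1 nb; rewrite big1 // => b2 _.
by rewrite ffunE (negbTE nb) mul0r scale0r.
Qed.

Lemma GmulDl (u u' v : GG) : Gmul (u + u') v = Gmul u v + Gmul u' v.
Proof.
rewrite /Gmul -big_split; apply eq_bigr => b _; rewrite -big_split.
by apply eq_bigr => b' _; rewrite ffunE mulrDl scalerDl.
Qed.
Lemma GmulDr (u v v' : GG) : Gmul u (v + v') = Gmul u v + Gmul u v'.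
Proof.
rewrite /Gmul -big_split; apply eq_bigr => b _; rewrite -big_split.
by apply eq_bigr => b' _; rewrite ffunE mulrDr scalerDl.
Qed.
Lemma Gmul0l (v : GG) : Gmul 0 v = 0.
Proof. by rewrite /Gmul big1 // => b _; rewrite big1 // => b' _; rewrite ffunE mul0r scale0r. Qed.
Lemma Gmul0r (v : GG) : Gmul v 0 = 0.
Proof. by rewrite /Gmul big1 // => b _; rewrite big1 // => b' _; rewrite ffunE mulr0 scale0r. Qed.
Lemma GmulZl c (u v : GG) : Gmul (c *: u) v = c *: Gmul u v.
Proof.
rewrite /Gmul scaler_sumr; apply eq_bigr => b _; rewrite scaler_sumr.
by apply eq_bigr => b' _; rewrite ffunE scalerA; congr (_ *: _); rewrite /GRing.scale /= mulrA.
Qed.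
Lemma GmulZr c (u v : GG) : Gmul u (c *: v) = c *: Gmul u v.
Proof.
rewrite /Gmul scaler_sumr; apply eq_bigr => b _; rewrite scaler_sumr.
by apply eq_bigr => b' _; rewrite ffunE scalerA; congr (_ *: _); rewrite /GRing.scale /= mulrCA.
Qed.
Lemma Gmul_suml I (s : seq I) (P : pred I) (F : I -> GG) (v : GG) :
  Gmul (\sum_(i <- s | P i) F i) v = \sum_(i <- s | P i) Gmul (F i) v.
Proof. apply: (big_morph (fun u => Gmul u v)); [by move=> x y; rewrite GmulDl | exact: Gmul0l]. Qed.
Lemma Gmul_sumr I (s : seq I) (P : pred I) (F : I -> GG) (v : GG) :
  Gmul v (\sum_(i <- s | P i) F i) = \sum_(i <- s | P i) Gmul v (F i).
Proof. apply: (big_morph (fun u => Gmul v u)); [by move=> x y; rewrite GmulDr | exact: Gmul0r]. Qed.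


Definition S1 (e : {ffun 'I_d -> bool}) (m' : 'I_d -> nat) := (\sum_i e i * m' i)%N.
Definition S2 (e : {ffun 'I_d -> bool}) (w' : {perm 'I_d}) :=
  #|[set ij : 'I_d * 'I_d | [&& (ij.1 < ij.2)%N, e ij.1, e ij.2 &
                 ((w'^-1)%g ij.2 < (w'^-1)%g ij.1)%N]]|.
Definition S3 (e : {ffun 'I_d -> bool}) (w' : {perm 'I_d}) (e' : {ffun 'I_d -> bool}) :=
  #|[set ij : 'I_d * 'I_d | [&& (ij.2 < ij.1)%N, e (w' ij.1) & e' ij.2]]|.

Lemma Gmul_mono m w e m' w' e' :
  Gmul (mono m w e) (mono m' w' e') =
  (-1)^+(S1 e m' + S2 e w' + S3 e w' e') *:
     mono (fun k => m k + m' ((w^-1)%g k))%N (w' * w)%g [ffun k => e (w' k) (+) e' k].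
Proof.
have := mkexpP m; have := mkexpP m'; rewrite {1 2}/mono.
case: (mkexp l m') => [mm' H'|[t Ht]]; case: (mkexp l m) => [mm H|[t0 Ht0]].
- rewrite Gmul_basis /bprod /=.
  rewrite (mkexp_ext (m' := fun k => (m k + m' ((w^-1)%g k))%N)); last by move=> k; rewrite H H'.
  rewrite /mono; case: mkexp => [mm2|]; last by rewrite scaler0.
  congr (_ *: _); congr ((-1)^+ (_ + _ + _)).
  by apply eq_bigr => i _; rewrite H'.
- by rewrite Gmul0l mono0 ?scaler0 //; exists t0; apply: leq_trans Ht0 (leq_addr _ _).
- by rewrite Gmul0r mono0 ?scaler0 //; exists (w t); rewrite permK; apply: leq_trans Ht (leq_addl _ _).
- by rewrite Gmul0r mono0 ?scaler0 //; exists (w t); rewrite permK; apply: leq_trans Ht (leq_addl _ _).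
Qed.

End Work.

Section Fv.
Variables (R : comPzRingType) (d l a N : nat) (A : 'I_a -> 'I_d) (hA : injective A).
Variable eps : 'I_a -> R.
Hypothesis heps : forall j, eps j * eps j = 1.
Hypothesis hN : (a.-1 * l.-1 <= N)%N.

Definition mr (rr : {ffun 'I_a -> 'I_N.+1}) (t : 'I_d) := (\sum_j rr j * (t == A j))%N.

Lemma mr_A rr i : mr rr (A i) = rr i.
Proof.
rewrite /mr (bigD1 i) //= eqxx muln1 big1 ?addn0 // => j nj.
by rewrite (inj_eq hA) eq_sym (negbTE nj) muln0.
Qed.

Lemma mr_out rr t : (forall j, A j != t) -> mr rr t = 0%N.
Proof. by move=> H; rewrite /mr big1 // => j _; rewrite eq_sym (negbTE (H j)) muln0. Qed.

Lemma Fval (mm0 : {ffun 'I_d -> 'I_l}) k :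
  \sum_(rr : {ffun 'I_a -> 'I_N.+1} | (\sum_(j < a) (rr j : nat))%N == N)
     (\prod_j eps j ^+ rr j) * ([forall t, (mm0 t : nat) == mr rr t + (t == A k)])%:R
  = if [forall t, [forall j, A j != t] ==> ((mm0 t : nat) == 0%N)]
        && ((\sum_j (mm0 (A j) : nat))%N == N.+1)
    then (\prod_j eps j ^+ mm0 (A j)) * eps k else 0.
Proof.
case: ifP => [/andP[Hsupp /eqP Hsum] | Hc].
- have Hk1 : (0 < mm0 (A k))%N.
    have Hle : (\sum_(j | j != k) (mm0 (A j) : nat) <= a.-1 * l.-1)%N.
      apply: leq_trans (_ : \sum_(j | j != k) l.-1 <= _)%N.
        by apply: leq_sum => j _; have := ltn_ord (mm0 (A j)); lia.
      by rewrite sum_nat_const cardC1 card_ord.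
    move: Hsum; rewrite (bigD1 k) //= => Hs.
    rewrite lt0n; apply/negP => /eqP H0; move: Hs; rewrite H0 add0n => Hs.
    by move: Hle; rewrite Hs => Hle; have := leq_trans Hle hN; rewrite ltnn.
  have Hbig j : (mm0 (A j) - (j == k) < N.+1)%N.
    case: (eqVneq j k) => [->|njk].
      by move: Hsum; rewrite (bigD1 k) //=; lia.
    rewrite subn0.
    have H1 : (mm0 (A j) + mm0 (A k) <= \sum_j0 (mm0 (A j0) : nat))%N.
      rewrite (bigD1 j) //= leq_add2l (bigD1 k) /=; last by rewrite eq_sym.
      exact: leq_addr.
    have Hk0 : (0 < mm0 (A k))%N by [].
    move: H1; rewrite Hsum; lia.
  pose rr0 : {ffun 'I_a -> 'I_N.+1} := [ffun j => inord (mm0 (A j) - (j == k))].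
  have Hrr0 j : (rr0 j : nat) = (mm0 (A j) - (j == k))%N by rewrite ffunE inordK.
  have Hs0 : (\sum_(j < a) (rr0 j : nat))%N == N.
    move: Hsum; rewrite (bigD1 k) //= => Hs.
    rewrite (bigD1 k) //= Hrr0 eqxx (eq_bigr (fun j => (mm0 (A j) : nat))); first by apply/eqP; lia.
    by move=> j /negbTE njk; rewrite Hrr0 njk subn0.
  rewrite (bigD1 rr0) //= [X in _ + X]big1 ?addr0; last first.
    move=> rr /andP[_ nrr].
    case: (boolP [forall t, _]) => [/forallP Ht | _]; last by rewrite mulr0.
    exfalso; apply: (negP nrr); apply/eqP/ffunP => j; apply/val_inj.
    rewrite /= Hrr0; have := Ht (A j); rewrite mr_A (inj_eq hA) => /eqP ->.
    by rewrite addnK.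
    have -> : [forall t, (mm0 t : nat) == mr rr0 t + (t == A k)].
      apply/forallP => t; case: (pickP (fun i => A i == t)) => [i /eqP <-| Hn].
        rewrite mr_A Hrr0 (inj_eq hA); case: (eqVneq i k) => [->|_]; last by apply/eqP; lia.
        by apply/eqP; move: Hk1; lia.
      rewrite mr_out => [|j]; last by rewrite Hn.
      have Hnk : (t == A k) = false by rewrite eq_sym Hn.
      rewrite Hnk; move/forallP: Hsupp => /(_ t) /implyP -> //.
      by apply/forallP => j; rewrite Hn.
    rewrite mulr1.
    have HP : (\prod_j eps j ^+ rr0 j) * eps k = \prod_j eps j ^+ mm0 (A j).
      rewrite (bigD1 k) //= [in RHS](bigD1 k) //= Hrr0 eqxx -mulrA [_ * eps k]mulrC mulrA -exprSr.
      rewrite subn1 prednK //; congr (_ * _); apply: eq_bigr => j /negbTE njk.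
      by rewrite Hrr0 njk subn0.
    by rewrite -HP -mulrA heps mulr1.
- rewrite big1 // => rr /eqP Hs.
  case: (boolP [forall t, _]) => [/forallP Ht|_]; last by rewrite mulr0.
  exfalso; move/negP: Hc; apply; apply/andP; split.
    apply/forallP => t; apply/implyP => /forallP Hn.
    have := Ht t; rewrite mr_out // (_ : (t == A k) = false) //.
    by apply/negbTE; rewrite eq_sym Hn.
  rewrite (eq_bigr (fun j => rr j + (j == k))%N); last first.
    by move=> j _; have := Ht (A j); rewrite mr_A (inj_eq hA) => /eqP.
  rewrite big_split /= Hs (bigD1 k) //= eqxx big1 ?addn0 ?addn1 // => j /negbTE.
  by move=> ->.
Qed.

End Fv.

Section W3.
Variables (R : comPzRingType) (d l : nat).
Local Notation GG := (G R d l).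
Local Notation e0 := ([ffun _ => false] : {ffun 'I_d -> bool}).
Local Notation mono := (mono R l).

Lemma mono_ext2 (m m' : 'I_d -> nat) w (e e' : {ffun 'I_d -> bool}) : (forall t, m t = m' t) -> (forall t, e t = e' t) ->
  mono m w e = mono m' w e'.
Proof. by move=> Hm He; rewrite (mono_ext R l w e Hm); congr mono; apply/ffunP. Qed.

Lemma S1_0 (m' : 'I_d -> nat) : S1 e0 m' = 0%N.
Proof. by rewrite /S1 big1 // => i _; rewrite ffunE. Qed.
Lemma S2_0 (w : {perm 'I_d}) : S2 e0 w = 0%N.
Proof. by rewrite /S2; apply: eq_card0 => ij; rewrite !inE !ffunE /= andbF. Qed.
Lemma S3_0 (w : {perm 'I_d}) e' : S3 e0 w e' = 0%N.
Proof. by rewrite /S3; apply: eq_card0 => ij; rewrite !inE !ffunE /= andbF. Qed.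
Lemma S2_1 (e : {ffun 'I_d -> bool}) : S2 e 1 = 0%N.
Proof.
rewrite /S2; apply: eq_card0 => ij; rewrite !inE invg1 !perm1.
apply/negP => /and4P[h1 _ _ h2]; by move: (ltn_trans h1 h2); rewrite ltnn.
Qed.
Lemma S3_1 (e : {ffun 'I_d -> bool}) : S3 e 1 e0 = 0%N.
Proof. by rewrite /S3; apply: eq_card0 => ij; rewrite !inE !ffunE /= !andbF. Qed.
Lemma S1_delta (e : {ffun 'I_d -> bool}) (j : 'I_d) : S1 e (fun k => (k == j) : nat) = e j.
Proof.
rewrite /S1 (bigD1 j) //= eqxx muln1 big1 ?addn0 // => i /negbTE ->.
by rewrite muln0.
Qed.

Lemma P1 (m : 'I_d -> nat) w' e' m' : Gmul (mono m 1 e0) (mono m' w' e') = mono (fun k => m k + m' k)%N w' e'.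
Proof.
rewrite Gmul_mono S1_0 S2_0 S3_0 expr0 scale1r mulg1.
by apply: mono_ext2 => t; rewrite ?invg1 ?perm1 // !ffunE.
Qed.
Lemma P2 (m : 'I_d -> nat) w e m' : Gmul (mono m w e) (mono m' 1 e0) =
  (-1)^+(S1 e m') *: mono (fun k => m k + m' ((w^-1)%g k))%N w e.
Proof.
rewrite Gmul_mono S2_1 S3_1 !addn0 mul1g.
by congr (_ *: _); apply: mono_ext2 => t //; rewrite !ffunE perm1 addbF.
Qed.
Lemma P3 (m : 'I_d -> nat) w m' e' : Gmul (mono m w e0) (mono m' 1 e') =
  mono (fun k => m k + m' ((w^-1)%g k))%N w e'.
Proof.
rewrite Gmul_mono S1_0 S2_0 S3_0 expr0 scale1r mul1g.
by apply: mono_ext2 => t //; rewrite !ffunE.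
Qed.
Lemma P4 (m : 'I_d -> nat) e e' : Gmul (mono m 1 e) (mono (fun _ => 0%N) 1 e') =
  (-1)^+(S3 e 1 e') *: mono m 1 [ffun k => e k (+) e' k].
Proof.
rewrite Gmul_mono S2_1 /S1 big1 => [|i _]; last by rewrite muln0.
rewrite !add0n mulg1; congr (_ *: _); apply: mono_ext2 => t.
  by rewrite addn0.
by rewrite !ffunE perm1.
Qed.

Lemma Gpow_x c (i : 'I_d) n : Gpow (c *: Gx R l i) n = c ^+ n *: mono (fun k => n * (k == i))%N 1 e0.
Proof.
elim: n => [|n IH].
  by rewrite expr0 scale1r /Gpow /=; apply: mono_ext => t; rewrite mul0n.
have -> : Gpow (c *: Gx R l i) n.+1 = Gmul (c *: Gx R l i) (Gpow (c *: Gx R l i) n) by [].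
rewrite IH GmulZl GmulZr scalerA -exprS; congr (_ *: _).
by rewrite [Gx R l i]/Gx -/(mono _ _ _) P1; apply: mono_ext => t; rewrite mulSn.
Qed.

Lemma Gprod_list a (A : 'I_a -> 'I_d) (eps : 'I_a -> R) (rr : 'I_a -> nat) (s : seq 'I_a) :
  foldr (fun j acc => Gmul (Gpow (eps j *: Gx R l (A j)) (rr j)) acc) (Gone R d l) s
  = (\prod_(j <- s) eps j ^+ rr j) *: mono (fun t => \sum_(j <- s) rr j * (t == A j))%N 1 e0.
Proof.
elim: s => [|j s IH] /=.
  by rewrite big_nil scale1r /Gone -/(mono _ _ _); apply: mono_ext => t; rewrite big_nil.
rewrite IH Gpow_x GmulZl GmulZr P1 scalerA big_cons; congr (_ *: _).
by apply: mono_ext => t; rewrite big_cons.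
Qed.

Lemma calpha_list a (A : 'I_a -> 'I_d) (alpha : 'I_a -> bool) (s : seq 'I_a) :
  exists n, foldr (fun j acc => Gmul (if alpha j then Gc R l (A j) else Gone R d l) acc)
       (Gone R d l) s
  = (-1)^+n *: mono (fun _ => 0%N) 1 [ffun t => odd (\sum_(j <- s) (alpha j && (A j == t)))].
Proof.
elim: s => [|j s [n IH]] /=.
  exists 0%N; rewrite expr0 scale1r /Gone -/(mono _ _ _).
  by apply: mono_ext2 => t //; rewrite !ffunE big_nil.
have -> : (if alpha j then Gc R l (A j) else Gone R d l) =
    mono (fun _ => 0%N) 1 [ffun k => alpha j && (k == A j)].
  case: (alpha j); rewrite /Gc /Gone -/(mono _ _ _);
  by apply: mono_ext2 => t //; rewrite ffunE.
rewrite IH GmulZr P4 scalerA -exprD; eexists; congr (_ *: _).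
apply: mono_ext2 => t //; rewrite !ffunE big_cons oddD; congr (_ (+) _).
by rewrite eq_sym; case: (_ && _).
Qed.

End W3.

Section W4.
Variables (d a : nat) (A : 'I_a -> 'I_d) (hA : injective A).

Lemma cycf_A k : cycf A (A k) = A (ordS k).
Proof.
rewrite /cycf; case: pickP => [j /eqP /hA -> // | H].
by have := H k; rewrite eqxx.
Qed.
Lemma cycf_out t : (forall k, A k != t) -> cycf A t = t.
Proof. by move=> H; rewrite /cycf; case: pickP => [j Hj|//]; rewrite (negbTE (H j)) in Hj. Qed.
Lemma cycf_inj : injective (cycf A).
Proof.
have cases t : (exists k, t = A k) \/ (forall k, A k != t).
  case: (pickP (fun k => A k == t)) => [k /eqP <-|H]; [left; by exists k | right => k; by rewrite H].
move=> t1 t2; case: (cases t1) => [[k1 ->]|H1]; case: (cases t2) => [[k2 ->]|H2].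
- by rewrite !cycf_A => /hA /ordS_inj ->.
- rewrite cycf_A (cycf_out H2) => E; by move: (H2 (ordS k1)); rewrite E eqxx.
- rewrite cycf_A (cycf_out H1) => E; by move: (H1 (ordS k2)); rewrite E eqxx.
- by rewrite (cycf_out H1) (cycf_out H2).
Qed.
Lemma sigmaAE t : sigmaA A t = cycf A t.
Proof.
rewrite /sigmaA.
refine (match boolP (injectiveb (cycf A)) as s return
  ((match s with AltTrue h => perm (elimT (injectiveP _) h) | AltFalse _ => 1%g end) t = cycf A t)
  with AltTrue h => _ | AltFalse h => _ end).
  by rewrite permE.
by exfalso; move/negP: h; apply; apply/injectiveP; exact: cycf_inj.
Qed.
End W4.

Section Sgn.
Variables (R : comPzRingType) (a : nat) (alpha : 'I_a -> bool).
Hypothesis halpha : ~~ odd (\sum_(j < a) alpha j)%N.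

Lemma sign2 n : (-1) ^+ n * (-1) ^+ n = 1 :> R.
Proof. by rewrite -exprD -signr_odd oddD addbb expr0. Qed.

Lemma epsA2 j : epsA R alpha j * epsA R alpha j = 1.
Proof. exact: sign2. Qed.

Lemma epsA_S k : (-1) ^+ alpha k * epsA R alpha (ordS k) = epsA R alpha k.
Proof.
rewrite /epsA.
have Hs : (\sum_(i < a | (i < k.+1)%N) alpha i = \sum_(i < a | (i < k)%N) alpha i + alpha k)%N.
  rewrite (bigD1 k) /= ?ltnSn // addnC; congr (_ + _)%N.
  by apply: eq_bigl => i; rewrite ltnS ltn_neqAle andbC.
case: (ltnP k.+1 a) => hk.
  have -> : (ordS k : nat) = k.+1 by rewrite /= modn_small.
  by rewrite Hs exprD mulrCA sign2 mulr1.
have hk' : k.+1 = a by have := ltn_ord k; lia.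
have -> : (ordS k : nat) = 0%N by rewrite /= hk' modnn.
rewrite big1 => [|i]; last by rewrite ltn0.
rewrite expr0 mulr1 -signr_odd -[in RHS]signr_odd; congr (_ ^+ _).
have Ht : (\sum_(i < a) alpha i = \sum_(i < a | (i < k)%N) alpha i + alpha k)%N.
  rewrite -Hs; apply: eq_bigl => i; by rewrite hk' ltn_ord.
move: halpha; rewrite Ht oddD; by case: (alpha k); case: odd.
Qed.
End Sgn.

Section W5.
Variables (R : comPzRingType) (l d : nat) (a : nat) (A : 'I_a -> 'I_d)
  (alpha : 'I_a -> bool) (r : nat).
Local Notation e0 := ([ffun _ => false] : {ffun 'I_d -> bool}).
Local Notation N := ((a - 1) * (l - 1) + r)%N.

Lemma hA_exp : hA R l A alpha r =
  \sum_(rr : {ffun 'I_a -> 'I_N.+1} | (\sum_(j < a) (rr j : nat))%N == N)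
    (\prod_j epsA R alpha j ^+ rr j) *: mono R l (mr A rr) 1 e0.
Proof.
rewrite /hA /=; apply: eq_bigr => rr _; rewrite /Gprod Gprod_list big_enum; congr (_ *: _).
by apply: mono_ext => t; rewrite big_enum.
Qed.

Definition Ealpha : {ffun 'I_d -> bool} :=
  [ffun t => odd (\sum_(j <- enum 'I_a) (alpha j && (A j == t)))].

Lemma Xexp : exists kap : R, Xcycle R l A r alpha =
  \sum_(rr : {ffun 'I_a -> 'I_N.+1} | (\sum_(j < a) (rr j : nat))%N == N)
    (kap * \prod_j epsA R alpha j ^+ rr j) *: mono R l (mr A rr) (sigmaA A) Ealpha.
Proof.
have [n Hc] := calpha_list R l A alpha (enum 'I_a).
exists ((-1)^+n); rewrite /Xcycle hA_exp /calpha /Gprod Hc.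
rewrite [Gperm _ _ _]/Gperm -/(mono R l _ _ _).
rewrite (Gmul_suml _ _ _ (mono R l (fun=> 0%N) (sigmaA A) e0)) Gmul_suml.
apply: eq_bigr => rr _.
rewrite !GmulZl GmulZr P1 P3 scalerA [_ * (-1) ^+ n]mulrC; congr (_ *: _).
by apply: mono_ext => t; rewrite !addn0.
Qed.

End W5.

Lemma Ealpha_A d a (A : 'I_a -> 'I_d) (hA : injective A) alpha k : Ealpha A alpha (A k) = alpha k.
Proof.
rewrite ffunE big_enum (bigD1 k) //= eqxx andbT big1 ?addn0 => [|i nik].
  by case: alpha.
by rewrite (inj_eq hA) (negbTE nik) andbF.
Qed.
Lemma Ealpha_out d a (A : 'I_a -> 'I_d) alpha t : (forall k, A k != t) -> Ealpha A alpha t = false.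
Proof. by move=> H; rewrite ffunE big1 // => i _; rewrite (negbTE (H i)) andbF. Qed.

Lemma main_aux (R : comPzRingType) (l d : nat)
  (a : nat) (A : 'I_a -> 'I_d) (hA : injective A)
  (alpha : 'I_a -> bool) (halpha : ~~ odd (\sum_(j < a) alpha j)%N)
  (r : nat) (j : 'I_d) :
  Gmul (Xcycle R l A r alpha) (Gx R l j)
  = Gmul (Gx R l j) (Xcycle R l A r alpha).
Proof.
have [kap ->] := Xexp R l A alpha r.
set σ := sigmaA A.
have GxE : Gx R l j = mono R l (fun k => (k == j) : nat) 1 [ffun _ => false] by [].
rewrite GxE Gmul_suml Gmul_sumr.
set N := ((a - 1) * (l - 1) + r)%N.
rewrite (eq_bigr (fun rr : {ffun 'I_a -> 'I_N.+1} => (kap * \prod_j0 epsA R alpha j0 ^+ rr j0 * (-1)^+ Ealpha A alpha j)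
    *: mono R l (fun t => mr A rr t + (t == σ j))%N σ (Ealpha A alpha))); last first.
  move=> rr _; rewrite GmulZl P2 S1_delta scalerA [_ * (-1) ^+ _]mulrC; congr (_ *: _).
  apply: mono_ext => t; congr (_ + nat_of_bool _)%N.
  by apply/eqP/eqP => [<-|->]; rewrite ?permKV ?permK.
rewrite [in RHS](eq_bigr (fun rr : {ffun 'I_a -> 'I_N.+1} => (kap * \prod_j0 epsA R alpha j0 ^+ rr j0)
    *: mono R l (fun t => mr A rr t + (t == j))%N σ (Ealpha A alpha))); last first.
  move=> rr _; rewrite GmulZr P1; congr (_ *: _).
  by apply: mono_ext => t; rewrite addnC.
apply/ffunP => -[[mm0 w0] e1]; rewrite !sum_ffunE.
case: (eqVneq w0 σ) => [->|nw]; last first.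
  by rewrite !big1 // => rr _; rewrite ffunE monoE (negbTE nw) andbF andFb; apply: scaler0.
case: (eqVneq e1 (Ealpha A alpha)) => [->|ne]; last first.
  by rewrite !big1 // => rr _; rewrite ffunE monoE (negbTE ne) andbF; apply: scaler0.
rewrite (eq_bigr (fun rr : {ffun 'I_a -> 'I_N.+1} => (kap * (-1)^+ Ealpha A alpha j) *
   ((\prod_j0 epsA R alpha j0 ^+ rr j0) *
    ([forall t, (mm0 t : nat) == mr A rr t + (t == σ j)])%:R))); last first.
  move=> rr _; rewrite ffunE monoE !eqxx !andbT -[(_ *: _)]/(_ * _).
  by rewrite -!mulrA; congr (_ * _); rewrite mulrCA.
rewrite [in RHS](eq_bigr (fun rr : {ffun 'I_a -> 'I_N.+1} => kap *
   ((\prod_j0 epsA R alpha j0 ^+ rr j0) *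
    ([forall t, (mm0 t : nat) == mr A rr t + (t == j)])%:R))); last first.
  move=> rr _; rewrite ffunE monoE !eqxx !andbT -[(_ *: _)]/(_ * _).
  by rewrite -!mulrA.
rewrite -!mulr_sumr.
have hN : (a.-1 * l.-1 <= N)%N by rewrite /N -!subn1 leq_addr.
case: (pickP (fun k => A k == j)) => [k /eqP <- | Hn]; last first.
  have Hn' : forall k, A k != j by move=> k; rewrite Hn.
  by rewrite /σ (sigmaAE hA) (cycf_out Hn') (Ealpha_out _ Hn') expr0 mulr1.
rewrite /σ (sigmaAE hA) (cycf_A hA) (Ealpha_A hA).
rewrite !(Fval hA (epsA2 R alpha) hN).
case: ifP => _; last by rewrite !mulr0.
rewrite -(epsA_S R halpha k) -!mulrA; congr (_ * _); by rewrite mulrCA.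
Qed.

Theorem mainTheorem10 (R : comPzRingType) (l d : nat) (hl : (0 < l)%N) (hd : (0 < d)%N)
  (a : nat) (ha : (0 < a)%N) (A : 'I_a -> 'I_d) (hA : injective A)
  (alpha : 'I_a -> bool) (halpha : ~~ odd (\sum_(j < a) alpha j)%N)
  (r : nat) (j : 'I_d) :
  Gmul (Xcycle R l A r alpha) (Gx R l j)
  = Gmul (Gx R l j) (Xcycle R l A r alpha).
Proof. exact: (main_aux R l hA halpha r j). Qed.
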